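(* Let $\beta,\delta>0$, $\gamma\in\mathbb{R}$, and suppose $p(x)=\beta x^4+\gamma x^3+\delta x^2$ attains its global minimum at the origin. Then $$\int_{-\infty}^{\infty}e^{-[\beta x^4+\gamma x^3+\delta x^2]}\,dx\approx\left[\beta^{1/4}+|\gamma|^{1/3}+\delta^{1/2}\right]^{-1},$$ with implied constants independent of $\beta,\gamma,\delta$.
   Context: $X\approx Y$ means there is an absolute constant $c>0$ with $cY\le X\le c^{-1}Y$. *)

(* Defs.v *)
From mathcomp Require Import all_boot all_order all_algebra.
From mathcomp Require Import all_classical all_reals all_analysis.
Set Implicit Arguments. Unset Strict Implicit. Unset Printing Implicit Defensive.
Import Order.TTheory GRing.Theory Num.Theory.
Local Open Scope ring_scope.

Definition quartic {R : realType} (beta gamma delta : R) (x : R) : R :=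
  beta * x ^+ 4 + gamma * x ^+ 3 + delta * x ^+ 2.

(* Main.v *)
Require Import Defs.
From mathcomp Require Import all_boot all_order all_algebra.
From mathcomp Require Import all_classical all_reals all_analysis.
From mathcomp Require Import ring lra measurable_realfun.
Import Order.TTheory GRing.Theory Num.Theory.
Import numFieldTopology.Exports numFieldNormedType.Exports.
Set Implicit Arguments. Unset Strict Implicit.
Local Open Scope classical_set_scope.
Local Open Scope ring_scope.

Section alg.
Variable R : realType.
Lemma sqr_normr (y : R) : `|y| ^+ 2 = y ^+ 2.
Proof. exact: real_normK (num_real y). Qed.

Lemma disc (beta gamma delta : R) : 0 < beta -> 0 < delta ->
  (forall x : R, quartic beta gamma delta 0 <= quartic beta gamma delta x) ->
  gamma ^+ 2 <= 4 * beta * delta.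
Proof.
move=> b0 d0 H; rewrite leNgt; apply/negP => Hg.
have := H (- gamma / (2 * beta)).
rewrite /quartic.
set x := - gamma / (2 * beta).
have hx : 2 * beta * x = - gamma by rewrite /x mulrC divfK // mulf_neq0 // gt_eqF.
have x0 : x != 0.
  apply/eqP => x0; move: hx Hg; rewrite x0 mulr0 => /eqP; rewrite eq_sym oppr_eq0 => /eqP ->.
  nra.
have x2 : 0 < x ^+ 2 by rewrite exprn_even_gt0.
have q : 4 * beta * (beta * x ^+ 2 + gamma * x + delta) < 0.
  have -> : 4 * beta * (beta * x ^+ 2 + gamma * x + delta) =
      (2 * beta * x) ^+ 2 + 2 * gamma * (2 * beta * x) + 4 * beta * delta by ring.
  rewrite hx; nra.
have q' : beta * x ^+ 2 + gamma * x + delta < 0 by nra.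
have -> : beta * 0 ^+ 4 + gamma * 0 ^+ 3 + delta * 0 ^+ 2 = 0 by rewrite !expr0n /=; ring.
have -> : beta * x ^+ 4 + gamma * x ^+ 3 + delta * x ^+ 2 =
   x ^+ 2 * (beta * x ^+ 2 + gamma * x + delta) by ring.
nra.
Qed.

Lemma quartic_le4 (a b gamma x : R) : 0 < a -> 0 < b ->
  gamma ^+ 2 <= 4 * a ^+ 4 * b ^+ 2 -> `|x| * (a + b) <= 1 ->
  quartic (a ^+ 4) gamma (b ^+ 2) x <= 4.
Proof.
move=> a0 b0 hg hx.
have ga : `|gamma| <= 2 * a ^+ 2 * b.
  rewrite -(ger0_norm (_ : 0 <= 2 * a ^+ 2 * b)); last by apply: mulr_ge0 => //; nra.
  by rewrite -ler_sqr ?normr_ge0 // !sqr_normr; nra.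
have u0 := normr_ge0 x.
have ux : x ^+ 2 = `|x| ^+ 2 by rewrite sqr_normr.
have g1 : gamma * x ^+ 3 <= 2 * a ^+ 2 * b * `|x| ^+ 3.
  have : gamma * x ^+ 3 <= `|gamma * x ^+ 3| := ler_norm _.
  rewrite normrM normrX => h; apply: (le_trans h).
  by apply: ler_wpM2r => //; rewrite exprn_ge0.
rewrite /quartic.
have -> : x ^+ 4 = `|x| ^+ 4 by rewrite -normrX ger0_norm // exprn_even_ge0.
rewrite ux.
have hb := mulr_ge0 (ltW b0) u0.
have ha := mulr_ge0 (ltW a0) u0.
have ax : a * `|x| <= 1 by move: hx; rewrite mulrDr (mulrC _ a) (mulrC _ b); lra.
have bx : b * `|x| <= 1 by move: hx; rewrite mulrDr (mulrC _ a) (mulrC _ b); lra.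
set u := `|x| in ax bx g1 u0 ha hb *.
have e : a ^+ 4 * u ^+ 4 + 2 * a ^+ 2 * b * u ^+ 3 + b ^+ 2 * u ^+ 2 =
   ((a * u) ^+ 2 + (b * u)) ^+ 2 by ring.
have h1 : (a * u) ^+ 2 <= 1 by nra.
have h2 : 0 <= b * u by nra.
nra.
Qed.


Lemma quartic_ge (a b gamma x : R) : 0 < a -> 0 < b ->
  gamma ^+ 2 <= 4 * a ^+ 4 * b ^+ 2 ->
  `|x| ^+ 2 * (a ^+ 2 * `|x| - b) ^+ 2 <= quartic (a ^+ 4) gamma (b ^+ 2) x.
Proof.
move=> a0 b0 hg.
have ga : `|gamma| <= 2 * a ^+ 2 * b.
  rewrite -(ger0_norm (_ : 0 <= 2 * a ^+ 2 * b)); last by apply: mulr_ge0 => //; nra.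
  by rewrite -ler_sqr ?normr_ge0 // !sqr_normr; nra.
have u0 := normr_ge0 x.
have g1 : - (2 * a ^+ 2 * b * `|x| ^+ 3) <= gamma * x ^+ 3.
  have : - (gamma * x ^+ 3) <= `|gamma * x ^+ 3| by rewrite -normrN ler_norm.
  rewrite normrM normrX => h.
  have : `|gamma| * `|x| ^+ 3 <= 2 * a ^+ 2 * b * `|x| ^+ 3.
    by apply: ler_wpM2r => //; rewrite exprn_ge0.
  lra.
rewrite /quartic.
have -> : x ^+ 4 = `|x| ^+ 4 by rewrite -normrX ger0_norm // exprn_even_ge0.
rewrite -[x ^+ 2]sqr_normr.
set u := `|x| in g1 u0 *.
nra.
Qed.

Lemma ptw1 (a b u0 u : R) : 0 < a -> 0 < b -> a ^+ 2 * u0 = b ->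
  0 <= u -> u <= u0 ->
  ((a + b) / 4 * u - 2 <= u ^+ 2 * (a ^+ 2 * u - b) ^+ 2) \/
  ((a + b) / 4 * (u0 - u) - 2 <= u ^+ 2 * (a ^+ 2 * u - b) ^+ 2).
Proof.
move=> a0 b0 hu0 u_ge0 uu0.
have -> : u ^+ 2 * (a ^+ 2 * u - b) ^+ 2 = (a ^+ 2 * u * (u0 - u)) ^+ 2.
  by rewrite -hu0; ring.
set t := a ^+ 2 * u * (u0 - u).
have tt : t - 1 <= t ^+ 2 by nra.
have a2 : 0 < a ^+ 2 by rewrite exprn_gt0.
have [h|h] := lerP (2 * u) u0.
- left.
  have t1 : b * u / 2 <= t.
    rewrite /t -hu0.
    have : 0 <= a ^+ 2 * u * (u0 - 2 * u) by apply: mulr_ge0 => //; [nra|lra].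
    lra.
  have t2 : a ^+ 2 * u ^+ 2 <= t.
    rewrite /t.
    have : 0 <= a ^+ 2 * u * (u0 - 2 * u) by apply: mulr_ge0 => //; [nra|lra].
    lra.
  have t3 : a * u - 1 <= a ^+ 2 * u ^+ 2.
    have := sqr_ge0 (2 * (a * u) - 1); nra.
  have := mulr_ge0 (ltW a0) u_ge0.
  lra.
- right.
  have w0 : 0 <= u0 - u by lra.
  have t1 : b * (u0 - u) / 2 <= t.
    rewrite /t -hu0.
    have : 0 <= a ^+ 2 * (u0 - u) * (2 * u - u0) by apply: mulr_ge0 => //; [nra|lra].
    lra.
  have t2 : a ^+ 2 * (u0 - u) ^+ 2 <= t.
    rewrite /t.
    have : 0 <= a ^+ 2 * (u0 - u) * (u - (u0 - u)) by apply: mulr_ge0 => //; [nra|lra].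
    lra.
  have t3 : a * (u0 - u) - 1 <= a ^+ 2 * (u0 - u) ^+ 2.
    have := sqr_ge0 (2 * (a * (u0 - u)) - 1); nra.
  have := mulr_ge0 (ltW a0) w0.
  lra.
Qed.

Lemma ptw2 (a b u0 u : R) : 0 < a -> 0 < b -> a ^+ 2 * u0 = b ->
  u0 <= u ->
  (a + b) / 4 * (u - u0) - 2 <= u ^+ 2 * (a ^+ 2 * u - b) ^+ 2.
Proof.
move=> a0 b0 hu0 uu0.
have u00 : 0 <= u0.
  have : 0 < a ^+ 2 * u0 by rewrite hu0.
  by rewrite pmulr_rgt0 ?exprn_gt0 // => /ltW.
have -> : u ^+ 2 * (a ^+ 2 * u - b) ^+ 2 = (a ^+ 2 * u * (u - u0)) ^+ 2.
  by rewrite -hu0; ring.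
set v := u - u0.
have v0 : 0 <= v by rewrite /v; lra.
set t := a ^+ 2 * u * v.
have tt : t - 1 <= t ^+ 2 by nra.
have a2 : 0 < a ^+ 2 by rewrite exprn_gt0.
have t1 : b * v <= t.
  rewrite /t -hu0.
  have : 0 <= a ^+ 2 * v * v by apply: mulr_ge0 => //; nra.
  rewrite /v; nra.
have t2 : a ^+ 2 * v ^+ 2 <= t.
  rewrite /t.
  have : 0 <= a ^+ 2 * v * u0 by apply: mulr_ge0 => //; nra.
  rewrite /v; nra.
have t3 : a * v - 1 <= a ^+ 2 * v ^+ 2.
    have := sqr_ge0 (2 * (a * v) - 1); nra.
have := mulr_ge0 (ltW a0) v0.
lra.
Qed.

End alg.

Unset Implicit Arguments.
Section an.
Variable R : realType.

Lemma lin_derive (al c x : R) :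
  is_derive x 1 (fun u : R => al * (u - c)) al.
Proof.
have -> : (fun u : R => al * (u - c)) = (cst al) * (id \- cst c).
  by apply/funext => u.
apply: is_derive_eq.
by rewrite scaler0 addr0 subr0 /GRing.scale /= mulr1.
Qed.

Lemma exp_lin_derive (al c x : R) :
  derivable (fun u => expR (al * (u - c))) x 1 /\
  (fun u => expR (al * (u - c)))^`()%classic x = al * expR (al * (x - c)).
Proof.
have h := lin_derive al c x.
have e : (fun u => expR (al * (u - c))) = expR \o (fun u => al * (u - c)) by [].
split.
  rewrite e; apply/derivable1_diffP; apply: differentiable_comp.
    by apply/derivable1_diffP; exact: ex_derive.
  by apply/derivable1_diffP; exact: derivable_expR.
rewrite e derive1_comp; [|exact: ex_derive|exact: derivable_expR].
rewrite !derive1E derive_val.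
by rewrite (@derive_val _ _ _ _ _ _ _ h) mulrC.
Qed.

Lemma cont_exp_lin (al c : R) : continuous (fun u : R => expR (al * (u - c))).
Proof.
move=> x; apply: differentiable_continuous; apply/derivable1_diffP.
exact: (exp_lin_derive al c x).1.
Qed.

Definition Fe (al c : R) (u : R) := al^-1 * expR (al * (u - c)).

Lemma Fe_prop (al c x : R) : al != 0 ->
  [/\ derivable (Fe al c) x 1, (Fe al c)^`()%classic x = expR (al * (x - c))
    & {for x, continuous (Fe al c)}].
Proof.
move=> al0; have [d1 d2] := exp_lin_derive al c x.
have dF : derivable (Fe al c) x 1.
  exact: (derivableM (derivable_cst al^-1 x 1) d1).
split => //.
  by rewrite /Fe derive1Ml // d2 mulrA mulVf // mul1r.
by apply: differentiable_continuous; apply/derivable1_diffP.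
Qed.

Notation mu := (@lebesgue_measure R).

Lemma int_exp_cc (al c x y : R) : al != 0 -> x < y ->
  (\int[mu]_(u in `[x, y]) (expR (al * (u - c)))%:E =
   ((expR (al * (y - c)) - expR (al * (x - c))) / al)%:E)%E.
Proof.
move=> al0 xy.
rewrite (continuous_FTC2 (F := Fe al c) xy).
- by rewrite -EFinB /Fe -mulrBr mulrC.
- exact/continuous_subspaceT/cont_exp_lin.
- split.
  + by move=> z _; have [] := Fe_prop al c z al0.
  + by apply: cvg_at_right_filter; have [] := Fe_prop al c x al0.
  + by apply: cvg_at_left_filter; have [] := Fe_prop al c y al0.
- by move=> z _; have [] := Fe_prop al c z al0.
Qed.


Lemma int_exp_cy (k c : R) : 0 < k ->
  (\int[mu]_(u in `[c, +oo[) (expR (- k * (u - c)))%:E = (k^-1)%:E)%E.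
Proof.
move=> k0.
have k0' : - k != 0 by rewrite oppr_eq0 gt_eqF.
rewrite (@ge0_continuous_FTC2y _ _ (Fe (- k) c) _ 0).
- by rewrite /Fe subrr mulr0 expR0 mulr1 sub0e -EFinN invrN opprK.
- by move=> x _; exact: expR_ge0.
- exact/continuous_subspaceT/cont_exp_lin.
- rewrite -(mulr0 (- k)^-1); apply: cvgMr.
  have -> : (fun x => expR (- k * (x - c))) =
      (fun z => expR (- z)) \o (fun x => k * (x + - c)).
    by apply/funext => x /=; rewrite mulNr.
  apply: (@cvg_comp _ _ _ _ _ _ (pinfty_nbhs R)); last exact: cvgr_expR.
  by apply: gt0_cvgMry => //; exact: cvg_addrr.
- by move=> x _; have [] := Fe_prop (- k) c x k0'.
- by apply: cvg_at_right_filter; have [] := Fe_prop (- k) c c k0'.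
- by move=> z _; have [] := Fe_prop (- k) c z k0'.
Qed.

End an.
Set Implicit Arguments.

Section main.
Variable R : realType.
Notation mu := (@lebesgue_measure R).

Definition gp (a b u : R) := u ^+ 2 * (a ^+ 2 * u - b) ^+ 2.
Definition Gf (a b u : R) := expR (- gp a b u).

Lemma cont_gp (a b : R) : continuous (gp a b).
Proof.
move=> x.
have cl : {for x, continuous (fun u : R => a ^+ 2 * u - b)}.
  apply: (@continuousB _ R^o _ (fun u : R => a ^+ 2 * u) (fun=> b)); last exact: cst_continuous.
  apply: (@continuousM _ _ (fun=> a ^+ 2) id); [exact: cst_continuous|done].
have ci : {for x, continuous (fun u : R => u)} by [].
exact: (continuousM (continuousM ci ci) (continuousM cl cl)).
Qed.

Lemma cont_Gf (a b : R) : continuous (Gf a b).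
Proof.
move=> x; apply: continuous_comp; last exact: continuous_expR.
apply: cvgN; exact: cont_gp.
Qed.

Lemma cont_Gf_abs (a b : R) : continuous (fun x : R => Gf a b `|x|).
Proof.
move=> x; apply: continuous_comp; last exact: cont_Gf.
exact: norm_continuous.
Qed.


Lemma Gf_le1 (a b u0 u : R) : 0 < a -> 0 < b -> a ^+ 2 * u0 = b ->
  0 <= u -> u <= u0 ->
  Gf a b u <= expR 2 * (expR (- ((a + b) / 4) * (u - 0)) + expR ((a + b) / 4 * (u - u0))).
Proof.
move=> a0 b0 hu0 u_ge0 uu0.
rewrite /Gf mulrDr.
have e1 := mulr_ge0 (expR_ge0 2) (expR_ge0 (- ((a + b) / 4) * (u - 0))).
have e2 := mulr_ge0 (expR_ge0 2) (expR_ge0 ((a + b) / 4 * (u - u0))).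
have [h|h] := ptw1 a0 b0 hu0 u_ge0 uu0.
- suff : expR (- gp a b u) <= expR 2 * expR (- ((a + b) / 4) * (u - 0)) by lra.
  rewrite -expRD ler_expR /gp; lra.
- suff : expR (- gp a b u) <= expR 2 * expR ((a + b) / 4 * (u - u0)) by lra.
  rewrite -expRD ler_expR /gp; lra.
Qed.

Lemma Gf_le2 (a b u0 u : R) : 0 < a -> 0 < b -> a ^+ 2 * u0 = b ->
  u0 <= u -> Gf a b u <= expR 2 * expR (- ((a + b) / 4) * (u - u0)).
Proof.
move=> a0 b0 hu0 uu0.
have h := ptw2 a0 b0 hu0 uu0.
rewrite /Gf -expRD ler_expR /gp; lra.
Qed.



Lemma mGf (a b : R) (D : set R) : measurable_fun D (EFin \o Gf a b).
Proof.
apply/measurable_EFinP; apply: measurable_funTS.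
apply: continuous_measurable_fun; exact: cont_Gf.
Qed.

Lemma mcont (f : R -> R) (D : set R) : continuous f -> measurable_fun D (EFin \o f).
Proof.
move=> cf; apply/measurable_EFinP; apply: measurable_funTS.
exact: continuous_measurable_fun.
Qed.

Lemma mexp2 (al c al' c' : R) (D : set R) :
  measurable_fun D (fun x => ((expR (al * (x - c)))%:E + (expR (al' * (x - c')))%:E)%E).
Proof.
have -> : (fun x => ((expR (al * (x - c)))%:E + (expR (al' * (x - c')))%:E)%E) =
   EFin \o (fun x => expR (al * (x - c)) + expR (al' * (x - c'))).
  by apply/funext => x /=; rewrite EFinD.
apply: mcont => x; apply: cvgD; exact: cont_exp_lin.
Qed.

Lemma mexp (al c : R) (D : set R) :
  measurable_fun D (fun x => (expR (al * (x - c)))%:E).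
Proof.
apply: (@mcont (fun x => expR (al * (x - c))) D) => x.
exact: cont_exp_lin.
Qed.

Lemma upper_half (a b : R) : (0 < a)%R -> (0 < b)%R ->
  (\int[mu]_(x in [set x | (0 <= x)%R]) (Gf a b x)%:E <=
  (3 * expR 2 / ((a + b) / 4))%:E)%E.
Proof.
move=> a0 b0.
set k := ((a + b) / 4)%R.
have k0 : (0 < k)%R by rewrite /k; lra.
set u0 := (b / a ^+ 2)%R.
have a2 : (a ^+ 2 != 0)%R by rewrite expf_neq0 // gt_eqF.
have hu0 : (a ^+ 2 * u0 = b)%R by rewrite /u0 mulrC divfK.
have u00 : (0 < u0)%R by rewrite /u0 divr_gt0 // exprn_gt0.
have -> : [set x : R | (0 <= x)%R] = `[0%R, u0]%classic `|` `]u0, +oo[%classic.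
  apply/seteqP; split => x /=.
    move=> x0; case: (lerP x u0) => h; [left|right]; by rewrite /= in_itv /= ?x0 ?h.
  by rewrite /= !in_itv /= andbT; case=> [/andP[]//|h]; apply: ltW; exact: lt_trans u00 h.
rewrite ge0_integral_setU //; last 3 first.
- exact: mGf.
- by move=> x _; rewrite lee_fin expR_ge0.
- apply/disj_setPS => x [] /=; rewrite !in_itv /= andbT => /andP[_ h1] h2.
  by move: (lt_le_trans h2 h1); rewrite ltxx.
rewrite integral_itv_obnd_cbnd; last exact: mGf.
have I1 : (\int[mu]_(x in `[0%R, u0]) (Gf a b x)%:E <= (2 * expR 2 / k)%:E)%E.
  apply: (@le_trans _ _ (\int[mu]_(x in `[0%R, u0])
     ((expR 2)%:E * ((expR (- k * (x - 0)))%:E + (expR (k * (x - u0)))%:E)))%E).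
    apply: ge0_le_integral => //.
    - by move=> x _; rewrite lee_fin expR_ge0.
    - exact: mGf.
    - apply: emeasurable_funM; first exact: measurable_cst.
      exact: mexp2.
    - move=> x; rewrite /= in_itv /= => /andP[x0 xu].
      by rewrite -EFinD -EFinM lee_fin; exact: Gf_le1.
  rewrite ge0_integralZl_EFin //; last 2 first.
  - by move=> x _; rewrite adde_ge0 // lee_fin expR_ge0.
  - exact: mexp2.
  rewrite ge0_integralD //; try (by move=> x _; rewrite lee_fin expR_ge0); try exact: mexp.
  rewrite !int_exp_cc //; last 2 first.
  - by rewrite gt_eqF.
  - by rewrite oppr_eq0 gt_eqF.
  rewrite -EFinD -EFinM lee_fin.
  rewrite !subr0 subrr !mulr0 expR0.
  set e1 := expR (- k * u0); set e2 := expR (k * (0 - u0)).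
  have ke : k != 0 by rewrite gt_eqF.

  have -> : (e1 - 1) / - k + (1 - e2) / k = (2 - e1 - e2) / k.
    by field.
  have -> : 2 * expR 2 / k = expR 2 * (2 / k) by rewrite mulrA (mulrC 2).
  apply: ler_wpM2l; first exact: expR_ge0.
  apply: ler_wpM2r; first by rewrite invr_ge0 ltW.
  have := expR_ge0 (- k * u0); have := expR_ge0 (k * (0 - u0)).
  rewrite -/e1 -/e2; lra.
have I2 : (\int[mu]_(x in `[u0, +oo[) (Gf a b x)%:E <= (expR 2 / k)%:E)%E.
  apply: (@le_trans _ _ (\int[mu]_(x in `[u0, +oo[)
     ((expR 2)%:E * (expR (- k * (x - u0)))%:E))%E).
    apply: ge0_le_integral => //.
    - by move=> x _; rewrite lee_fin expR_ge0.
    - exact: mGf.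
    - apply: emeasurable_funM; first exact: measurable_cst.
      exact: mexp.
    - move=> x; rewrite /= in_itv /= andbT => xu.
      by rewrite -EFinM lee_fin; exact: Gf_le2.
  rewrite ge0_integralZl_EFin //; try (by move=> x _; rewrite lee_fin expR_ge0); try exact: mexp.
  by rewrite int_exp_cy // -EFinM.
apply: le_trans (leeD I1 I2) _.
rewrite -EFinD lee_fin.
have ke : k != 0 by rewrite gt_eqF.
by rewrite le_eqVlt; apply/orP; left; apply/eqP; field.
Qed.

End main.

Section fin.
Variable R : realType.
Notation mu := (@lebesgue_measure R).

Lemma cont_quartic (be ga de : R) : continuous (quartic be ga de).
Proof.
move=> x; rewrite /quartic.
apply: cvgD; first apply: cvgD.
- apply: cvgM; [exact: cvg_cst | exact: exprn_continuous].
- apply: cvgM; [exact: cvg_cst | exact: exprn_continuous].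
- apply: cvgM; [exact: cvg_cst | exact: exprn_continuous].
Qed.

Definition qf (be ga de x : R) := expR (- quartic be ga de x).

Lemma cont_eq (be ga de : R) : continuous (qf be ga de).
Proof.
move=> x; apply: continuous_comp; last exact: continuous_expR.
apply: cvgN; exact: cont_quartic.
Qed.

Lemma lower (a b ga : R) : 0 < a -> 0 < b -> ga ^+ 2 <= 4 * a ^+ 4 * b ^+ 2 ->
  ((expR (-4) * (2 / (a + b)))%:E <=
   \int[mu]_(x in [set: R]) (expR (- quartic (a ^+ 4) ga (b ^+ 2) x))%:E)%E.
Proof.
move=> a0 b0 hg.
set S := a + b.
have S0 : 0 < S by rewrite /S; lra.
have mf : measurable_fun [set: R] (EFin \o qf (a ^+ 4) ga (b ^+ 2)).
  by apply/measurable_EFinP; apply: continuous_measurable_fun; exact: cont_eq.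
have := @ge0_subset_integral _ _ _ mu `[- S^-1, S^-1]%classic [set: R] (measurable_itv _) measurableT _ mf.
move=> /(_ (fun x _ => expR_ge0 _) (fun x _ => I)) H.
apply: le_trans H.
apply: (@le_trans _ _ (\int[mu]_(x in `[(- S^-1)%R, S^-1%R]) (cst (expR (-4))%:E x))%E).
  rewrite integral_cst //= lebesgue_measure_itv /=.
  have h : (- S^-1 < S^-1)%R by rewrite gtrN // invr_gt0.
  rewrite lte_fin h -EFinD -EFinM lee_fin opprK.
  by rewrite le_eqVlt; apply/orP; left; apply/eqP; field; rewrite gt_eqF.
apply: ge0_le_integral => //.
- by move=> x _; rewrite lee_fin expR_ge0.
- apply/measurable_EFinP; apply: measurable_funTS.
  by apply: continuous_measurable_fun; exact: cont_eq.
- move=> x; rewrite /= in_itv /= => /andP[h1 h2].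
  rewrite /qf lee_fin ler_expR lerN2; apply: quartic_le4 => //.
  have hx : `|x| <= S^-1 by rewrite ler_norml h1 h2.
  rewrite -/S; have := ler_wpM2r (ltW S0) hx.
  by rewrite mulVf ?gt_eqF.
Qed.

Lemma upper (a b ga : R) : 0 < a -> 0 < b -> ga ^+ 2 <= 4 * a ^+ 4 * b ^+ 2 ->
  (\int[mu]_(x in [set: R]) (expR (- quartic (a ^+ 4) ga (b ^+ 2) x))%:E <=
   (2 * (3 * expR 2 / ((a + b) / 4)))%:E)%E.
Proof.
move=> a0 b0 hg.
apply: (@le_trans _ _ (\int[mu]_(x in [set: R]) (Gf a b `|x|)%:E)%E).
  apply: ge0_le_integral.
  - exact: measurableT.
  - by move=> x _; rewrite lee_fin expR_ge0.
  - have h := @cont_eq (a ^+ 4) ga (b ^+ 2); rewrite /qf in h.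
    apply/measurable_EFinP; apply: measurable_funTS.
    exact: continuous_measurable_fun h.
  - have h := @cont_Gf_abs R a b.
    apply/measurable_EFinP; apply: measurable_funTS.
    exact: continuous_measurable_fun h.
  - move=> x _; rewrite lee_fin /Gf ler_expR lerN2 /gp.
    exact: (quartic_ge x a0 b0 hg).
rewrite (@ge0_symfun_integralT _ (fun x => Gf a b `|x|)); last 3 first.
- by move=> x; exact: expR_ge0.
- exact: cont_Gf_abs.
- by move=> x /=; rewrite normrN.
rewrite EFinM; apply: lee_wpmul2l; first by rewrite lee_fin.
have -> : (\int[mu]_(x in [set x | (0 <= x)%R]) (Gf a b `|x|)%:E =
   \int[mu]_(x in [set x | (0 <= x)%R]) (Gf a b x)%:E)%E.
  by apply: eq_integral => x; rewrite inE /= => x0; rewrite ger0_norm.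
exact: upper_half.
Qed.


End fin.

Lemma fin1 (R : realType) (a b g E : R) : 0 < a -> 0 < b -> 0 <= g -> 1 <= E ->
  (100 * E * E)^-1 * (a + g + b)^-1 <= (E * E)^-1 * (2 / (a + b)).
Proof.
move=> a0 b0 g0 E1.
have S0 : 0 < a + b by lra.
have T0 : 0 < a + g + b by lra.
have EE : 0 < E * E by nra.
have h1 : (100 * E * E)^-1 <= (E * E)^-1.
  rewrite -mulrA lef_pV2 ?posrE; [nra| nra | done].
have h2 : (a + g + b)^-1 <= 2 / (a + b).
  have : (a + g + b)^-1 <= (a + b)^-1 by rewrite lef_pV2 ?posrE //; lra.
  have : 0 < (a + b)^-1 by rewrite invr_gt0.
  have -> : 2 / (a + b) = (a + b)^-1 + (a + b)^-1 by field; rewrite gt_eqF.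
  lra.
apply: ler_pM => //.
- by rewrite invr_ge0; nra.
- by rewrite invr_ge0; lra.
Qed.

Lemma fin2 (R : realType) (a b g E : R) : 0 < a -> 0 < b -> 0 <= g ->
  g <= 2 * (a + b) -> 1 <= E ->
  2 * (3 * E / ((a + b) / 4)) <= ((100 * E * E)^-1)^-1 * (a + g + b)^-1.
Proof.
move=> a0 b0 g0 gS E1.
set S := a + b; set T := a + g + b.
have S0 : 0 < S by rewrite /S; lra.
have T0 : 0 < T by rewrite /T; lra.
have key : 24 * E * T <= 100 * E * E * S.
  have h : T <= 3 * S by rewrite /T /S; lra.
  have h1 : 0 <= E * (3 * S - T) by apply: mulr_ge0; lra.
  have h2 : 0 <= (E - 1) * (E * S) by apply: mulr_ge0; [lra|nra].
  nra.
have uv : 0 <= S^-1 * T^-1 by apply: mulr_ge0; rewrite invr_ge0 ltW.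
have -> : 2 * (3 * E / (S / 4)) = (24 * E * T) * (S^-1 * T^-1).
  by field; apply/andP; split; rewrite gt_eqF.
have -> : ((100 * E * E)^-1)^-1 * T^-1 = (100 * E * E * S) * (S^-1 * T^-1).
  by rewrite invrK; field; apply/andP; split; rewrite gt_eqF.
exact: ler_wpM2r.
Qed.

Theorem lemma4p7 (R : realType) :
  exists c : R, 0 < c /\
  forall beta gamma delta : R, 0 < beta -> 0 < delta ->
    (forall x : R, quartic beta gamma delta 0 <= quartic beta gamma delta x) ->
    let Y := (powR beta (4^-1) + powR `|gamma| (3^-1) + powR delta (2^-1))^-1 in
    let I := (\int[lebesgue_measure]_(x in [set: R])
                 (expR (- quartic beta gamma delta x))%:E)%E in
    ((c * Y)%:E <= I)%E /\ (I <= (c^-1 * Y)%:E)%E.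
Proof.
set E := expR (2 : R).
have E1 : 1 <= E by rewrite /E -expR0 ler_expR.
have E0 : 0 < E by lra.
exists (100 * E * E)^-1; split; first by rewrite invr_gt0; nra.
move=> be ga de be0 de0 H Y I.
have hg := disc be0 de0 H.
set a := powR be (4^-1).
set b := powR de (2^-1).
set g := powR `|ga| (3^-1).
have a0 : 0 < a by exact: powR_gt0.
have b0 : 0 < b by exact: powR_gt0.
have g0 : 0 <= g by exact: powR_ge0.
have ha : a ^+ 4 = be.
  by rewrite /a -powR_mulrn ?powR_ge0 // -powRrM mulVf ?powRr1 // ?ltW.
have hb : b ^+ 2 = de.
  by rewrite /b -powR_mulrn ?powR_ge0 // -powRrM mulVf ?powRr1 // ?ltW.
have hc : g ^+ 3 = `|ga|.
  by rewrite /g -powR_mulrn ?powR_ge0 // -powRrM mulVf ?powRr1.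
rewrite -ha -hb in hg.
have ga2 : `|ga| <= 2 * a ^+ 2 * b.
  rewrite -(ger0_norm (_ : 0 <= 2 * a ^+ 2 * b)); last by apply: mulr_ge0 => //; nra.
  by rewrite -ler_sqr ?normr_ge0 // !sqr_normr; nra.
have gS : g <= 2 * (a + b).
  rewrite leNgt; apply/negP => hgt.
  have S0 : 0 < a + b by lra.
  have h3 : (2 * (a + b)) ^+ 3 < g ^+ 3.
    rewrite ltrXn2r // ?nnegrE //; lra.
  rewrite hc in h3.
  have : 2 * a ^+ 2 * b <= (2 * (a + b)) ^+ 3 by nra.
  lra.
have eI : I = (\int[lebesgue_measure]_(x in [set: R])
                 (expR (- quartic (a ^+ 4) ga (b ^+ 2) x))%:E)%E by rewrite /I ha hb.
have eY : Y = (a + g + b)^-1 by [].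
rewrite eI eY; split.
- apply: le_trans (lower a0 b0 hg); rewrite lee_fin.
  have -> : expR (-4) = (E * E)^-1.
    by rewrite /E -expRD -expRN; congr expR; lra.
  exact: fin1.
- apply: le_trans (upper a0 b0 hg) _; rewrite lee_fin.
  exact: fin2.
Qed.
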